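(* Assume the standing setup below. Let $x\in X$ (so $x\ne y$) and let $s\le t$ be phase change numbers of $X$ with $s_1\le s$. Suppose that $[x]_{s,Y}=[x]_{t,Y}$ (i.e. $(s,[x]_{s,Y})\to(t,[x]_{t,Y})$ is a partial layer of $Y$) and that $y\in[x]_{s,Y}$. Then $[x]_{s,X}=[x]_{t,X}$, i.e. $(s,[x]_{s,X})\to(t,[x]_{t,X})$ is a partial layer of $X$.
   Context: For a finite set $Z\subset\mathbb{R}^n$ and a real number $s\ge 0$, the Vietoris–Rips complex $V_s(Z)$ is the simplicial complex with vertex set $Z$ whose simplices are the nonempty subsets $\sigma\subseteq Z$ with $d(z,z')\le s$ for all $z,z'\in\sigma$ ($d$ the Euclidean distance). For $z\in Z$, $[z]_{s,Z}\subseteq Z$ denotes the set of vertices of the path component of $V_s(Z)$ containing $z$. A partial layer for $Z$ is a pair of parameters $s\le t$ and $z\in Z$ (written as an edge $(s,[z]_{s,Z})\to(t,[z]_{t,Z})$) with $[z]_{s,Z}=[z]_{t,Z}$ as subsets of $Z$. Standing setup: $X\subset\mathbb{R}^n$ is a finite set with at least two points, $y\in\mathbb{R}^n\setminus X$, $Y=X\sqcup\{y\}$. The phase change numbers of $X$ are the distinct values $0=s_0<s_1<\dots<s_k$ of $d(x,x')$ for $x,x'\in X$. There are $x_0\in X$ and a real $r>0$ with $d(y,x_0)<r$ and $r<s_{i+1}-s_i$ for all $0\le i<k$. *)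

(* Defs.v *)
From Stdlib Require Import Reals Lra List Relations.
Import ListNotations.
Open Scope R_scope.

(* A point of R^n is a list of reals of length n. *)
Definition point := list R.

(* Euclidean distance (on points of equal length). *)
Definition edist (p q : point) : R :=
  sqrt (fold_right Rplus 0 (map (fun ab => (fst ab - snd ab) ^ 2) (combine p q))).

Definition finite_set_in (n : nat) (Z : list point) : Prop :=
  NoDup Z /\ Forall (fun p => length p = n) Z.

(* Edge of the 1-skeleton of the Vietoris-Rips complex V_s(Z). *)
Definition vr_edge (s : R) (Z : list point) (a b : point) : Prop :=
  In a Z /\ In b Z /\ edist a b <= s.

(* [z]_{s,Z}: vertex set of the path component of V_s(Z) containing z
   (as a predicate on points). *)
Definition vr_comp (s : R) (Z : list point) (z : point) (w : point) : Prop :=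
  In w Z /\ clos_refl_trans point (vr_edge s Z) z w.

Definition same_set (A B : point -> Prop) : Prop := forall w, A w <-> B w.

Definition is_pcn (X : list point) (a : R) : Prop :=
  exists x x', In x X /\ In x' X /\ a = edist x x'.

Definition gap_bound (X : list point) (r : R) : Prop :=
  forall a b, is_pcn X a -> is_pcn X b -> a < b ->
    (forall c, is_pcn X c -> ~ (a < c /\ c < b)) -> r < b - a.

Definition is_s1 (X : list point) (s1 : R) : Prop :=
  is_pcn X s1 /\ 0 < s1 /\ (forall c, is_pcn X c -> 0 < c -> s1 <= c).

(* Main.v *)
Require Import Defs.
From Stdlib Require Import Reals List.
From Stdlib Require Import Lra Psatz Relations Classical.
Open Scope R_scope.

Lemma mink2 (x1 x2 y1 y2 : R) :
  sqrt ((x1+x2)^2 + (y1+y2)^2) <= sqrt (x1^2+y1^2) + sqrt (x2^2+y2^2).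
Proof.
  remember (x1^2+y1^2) as A eqn:EA. remember (x2^2+y2^2) as B eqn:EB.
  assert (HA : 0 <= A) by (subst A; nra).
  assert (HB : 0 <= B) by (subst B; nra).
  pose proof (sqrt_pos A). pose proof (sqrt_pos B).
  pose proof (sqrt_sqrt A HA). pose proof (sqrt_sqrt B HB).
  assert (HC : x1*x2+y1*y2 <= sqrt A * sqrt B).
  { assert (Hsq : (x1*x2+y1*y2)^2 <= (sqrt A * sqrt B)^2).
    { replace ((sqrt A * sqrt B)^2) with ((sqrt A * sqrt A) * (sqrt B * sqrt B)) by ring.
      rewrite H1, H2. subst A B. pose proof (pow2_ge_0 (x1*y2-x2*y1)). nra. }
    assert (0 <= sqrt A * sqrt B) by nra. nra. }
  rewrite <- (sqrt_square (sqrt A + sqrt B)) by lra.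
  apply sqrt_le_1_alt.
  replace ((sqrt A + sqrt B) * (sqrt A + sqrt B)) with
    (sqrt A * sqrt A + sqrt B * sqrt B + 2 * (sqrt A * sqrt B)) by ring.
  rewrite H1, H2. subst A B. nra.
Qed.

Lemma edist_nil (q : point) : edist nil q = 0.
Proof. unfold edist; simpl; apply sqrt_0. Qed.

Lemma edist_nil_r (q : point) : edist q nil = 0.
Proof. unfold edist; destruct q; simpl; apply sqrt_0. Qed.

Definition ss (p q : point) : R :=
  fold_right Rplus 0 (map (fun ab => (fst ab - snd ab) ^ 2) (combine p q)).

Lemma ss_nonneg p : forall q, 0 <= ss p q.
Proof.
  induction p as [|a p IH]; intros [|b q]; unfold ss; cbn [combine map fold_right fst snd]; try lra.
  specialize (IH q). unfold ss in IH. pose proof (pow2_ge_0 (a-b)). lra.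
Qed.

Lemma edist_cons a p b q :
  edist (a::p) (b::q) = sqrt ((a-b)^2 + (edist p q)^2).
Proof.
  unfold edist at 2. fold (ss p q). rewrite pow2_sqrt by apply ss_nonneg.
  reflexivity.
Qed.

Lemma edist_sym p : forall q, edist p q = edist q p.
Proof.
  induction p as [|a p IH]; intros [|b q].
  - reflexivity.
  - rewrite edist_nil, edist_nil_r; reflexivity.
  - rewrite edist_nil, edist_nil_r; reflexivity.
  - rewrite !edist_cons, IH. f_equal. ring.
Qed.

Lemma edist_tri p : forall q r, length p = length q -> length q = length r ->
  edist p r <= edist p q + edist q r.
Proof.
  induction p as [|a p IH]; intros q r Hpq Hqr.
  - rewrite edist_nil. pose proof (sqrt_pos (ss q r)). unfold edist at 2.
    fold (ss q r). rewrite edist_nil. lra.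
  - destruct q as [|b q]; [discriminate|]. destruct r as [|c r]; [discriminate|].
    simpl in Hpq, Hqr. injection Hpq as Hpq. injection Hqr as Hqr.
    specialize (IH q r Hpq Hqr).
    rewrite !edist_cons.
    pose proof (sqrt_pos (ss p r)) as H0. change (0 <= edist p r) in H0.
    pose proof (sqrt_pos (ss p q)) as H. change (0 <= edist p q) in H.
    pose proof (sqrt_pos (ss q r)) as H1. change (0 <= edist q r) in H1.
    eapply Rle_trans; [| apply (mink2 (a-b) (b-c))].
    apply sqrt_le_1_alt.
    replace (a - b + (b - c)) with (a - c) by ring. nra.
Qed.

Lemma edist_nonneg p q : 0 <= edist p q.
Proof. apply sqrt_pos. Qed.

Lemma min_above (l : list R) (s : R) :
  (exists z, In z l /\ s < z) ->
  exists m, In m l /\ s < m /\ forall z, In z l -> s < z -> m <= z.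
Proof.
  induction l as [|a l IH]; intros [z [Hz Hs]].
  - destruct Hz.
  - destruct (classic (exists z, In z l /\ s < z)) as [Hex|Hno].
    + destruct (IH Hex) as [m [Hm [Hsm Hmin]]].
      destruct (Rlt_dec s a) as [Ha|Ha].
      * destruct (Rle_dec a m).
        -- exists a. split; [left; reflexivity|]. split; [lra|].
           intros z' [<-|Hz'] Hs'; [lra|]. specialize (Hmin z' Hz' Hs'). lra.
        -- exists m. split; [right; exact Hm|]. split; [lra|].
           intros z' [<-|Hz'] Hs'; [lra|]. auto.
      * exists m. split; [right; exact Hm|]. split; [lra|].
        intros z' [<-|Hz'] Hs'; [lra|]. auto.
    + exists a. destruct Hz as [<-|Hz].
      * split; [left; reflexivity|]. split; [lra|].
        intros z' [<-|Hz'] Hs'; [lra|]. exfalso; apply Hno; eauto.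
      * exfalso; apply Hno; eauto.
Qed.

Definition pcn_list (X : list point) : list R :=
  flat_map (fun p => map (fun q => edist p q) X) X.

Lemma pcn_list_spec X z : is_pcn X z <-> In z (pcn_list X).
Proof.
  unfold pcn_list, is_pcn. rewrite in_flat_map. split.
  - intros [p [q [Hp [Hq ->]]]]. exists p. split; auto.
    apply in_map_iff. eauto.
  - intros [p [Hp Hz]]. apply in_map_iff in Hz. destruct Hz as [q [<- Hq]].
    eauto.
Qed.

Lemma crt_mono (R1 R2 : point -> point -> Prop) :
  (forall a b, R1 a b -> R2 a b) ->
  forall u v, clos_refl_trans point R1 u v -> clos_refl_trans point R2 u v.
Proof.
  intros H u v Huv. induction Huv.
  - apply rt_step; auto.
  - apply rt_refl.
  - eapply rt_trans; eauto.
Qed.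

Lemma crt_map (R1 R2 : point -> point -> Prop) (f : point -> point) :
  (forall a b, R1 a b -> clos_refl_trans point R2 (f a) (f b)) ->
  forall u v, clos_refl_trans point R1 u v -> clos_refl_trans point R2 (f u) (f v).
Proof.
  intros H u v Huv. induction Huv.
  - auto.
  - apply rt_refl.
  - eapply rt_trans; eauto.
Qed.

Theorem corollary14 (n : nat) (X : list point) (y x0 : point) (r : R)
  (x : point) (s t : R) :
  finite_set_in n X -> (2 <= length X)%nat ->
  length y = n -> ~ In y X ->
  In x0 X -> 0 < r -> edist y x0 < r -> gap_bound X r ->
  In x X ->
  is_pcn X s -> is_pcn X t -> s <= t ->
  (exists s1, is_s1 X s1 /\ s1 <= s) ->
  same_set (vr_comp s (y :: X) x) (vr_comp t (y :: X) x) ->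
  vr_comp s (y :: X) x y ->
  same_set (vr_comp s X x) (vr_comp t X x).
Proof.
  intros [Hnd Hlen] _ Hy HyX Hx0 Hr Hyx0 Hgap Hx Hs Ht Hst _ Hsame _.
  rewrite Forall_forall in Hlen.
  assert (Hclose : forall c, In c X -> edist y c <= s -> edist x0 c <= s).
  { intros c Hc Hyc.
    assert (Htri : edist x0 c <= edist x0 y + edist y c).
    { apply edist_tri; [rewrite (Hlen x0 Hx0); auto | rewrite (Hlen c Hc); auto]. }
    rewrite (edist_sym x0 y) in Htri.
    destruct (Rle_dec (edist x0 c) s) as [|Hgt]; [assumption|exfalso].
    apply Rnot_le_lt in Hgt.
    destruct (min_above (pcn_list X) s) as [b [Hb [Hsb Hmin]]].
    { exists (edist x0 c). split; [apply pcn_list_spec; exists x0, c; auto|lra]. }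
    apply pcn_list_spec in Hb.
    assert (Hbc : b <= edist x0 c).
    { apply Hmin; [apply pcn_list_spec; exists x0, c; auto|lra]. }
    assert (r < b - s).
    { apply Hgap; auto. intros c' Hc' [H1 H2].
      assert (b <= c') by (apply Hmin; [apply pcn_list_spec; auto|lra]). lra. }
    lra. }
  pose (f := fun p : point => if list_eq_dec Req_dec_T p y then x0 else p).
  assert (fX : forall p, In p X -> f p = p).
  { intros p Hp. unfold f. destruct (list_eq_dec Req_dec_T p y) as [->|]; auto.
    contradiction. }
  assert (Hedge : forall a b, vr_edge s (y :: X) a b ->
            clos_refl_trans point (vr_edge s X) (f a) (f b)).
  { intros a b [Ha [Hb Hab]].
    unfold f. destruct (list_eq_dec Req_dec_T a y) as [Eay|Nay];
      destruct (list_eq_dec Req_dec_T b y) as [Eby|Nby].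
    - apply rt_refl.
    - destruct Hb as [Hb|Hb]; [congruence|]. subst a.
      apply rt_step. repeat split; auto.
    - destruct Ha as [Ha|Ha]; [congruence|]. subst b.
      apply rt_step. repeat split; auto.
      rewrite edist_sym. apply Hclose; auto. rewrite edist_sym; auto.
    - destruct Ha as [Ha|Ha]; [congruence|]. destruct Hb as [Hb|Hb]; [congruence|].
      apply rt_step. repeat split; auto. }
  intro w; split.
  - intros [Hw Hxw]. split; auto.
    eapply crt_mono; [|exact Hxw]. intros a b [Ha [Hb Hab]]. repeat split; auto; lra.
  - intros [Hw Hxw].
    assert (HY : vr_comp t (y :: X) x w).
    { split; [right; auto|]. eapply crt_mono; [|exact Hxw].
      intros a b [Ha [Hb Hab]]. repeat split; auto; right; auto. }
    apply Hsame in HY. destruct HY as [_ HY].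
    split; auto.
    pose proof (crt_map _ _ f Hedge _ _ HY) as HH.
    rewrite (fX x Hx), (fX w Hw) in HH. exact HH.
Qed.
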